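(* Let $T$ be a tree of order $n>1$ rooted at a vertex $v$, and let $l\ne v$ be a leaf of $T$. Then the number of subtrees of $T$ containing both $v$ and $l$ is at most $2^{n-2}$, with equality if and only if $T$ is the star $S_n$ and $v$ is its center (i.e. $v$ is adjacent to every other vertex of $T$).
   Context: A subtree of a tree $T$ is a connected subgraph of $T$, determined by its nonempty vertex set. A leaf is a vertex of degree $1$. The star $S_n$ consists of a central vertex adjacent to $n-1$ leaves. *)

(* Defs.v *)
From mathcomp Require Import all_boot.
Set Implicit Arguments. Unset Strict Implicit. Unset Printing Implicit Defensive.

Definition simple_graph (T : finType) (e : rel T) : Prop :=
  symmetric e /\ irreflexive e.

Definition induced (T : finType) (e : rel T) (S : {set T}) : rel T :=
  [rel x y | [&& x \in S, y \in S & e x y]].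

Definition connected_graph (T : finType) (e : rel T) : Prop :=
  forall x y : T, connect e x y.

(* A cycle: a closed walk x -> p_1 -> ... -> p_k -> x with k >= 2 and all
   vertices x, p_1, ..., p_k distinct (length >= 3). *)
Definition acyclic (T : finType) (e : rel T) : Prop :=
  forall (x : T) (p : seq T),
    2 <= size p -> uniq (x :: p) -> path e x p -> ~~ e (last x p) x.

Definition is_tree (T : finType) (e : rel T) : Prop :=
  simple_graph e /\ connected_graph e /\ acyclic e.

(* A subtree: a connected subgraph determined by its nonempty vertex set S,
   i.e. the subgraph induced by S is connected. *)
Definition is_subtree (T : finType) (e : rel T) (S : {set T}) : bool :=
  (S != set0) && [forall x in S, forall y in S, connect (induced e S) x y].

Definition degree (T : finType) (e : rel T) (x : T) : nat := #|[set y | e x y]|.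

Definition is_leaf (T : finType) (e : rel T) (x : T) : bool := degree e x == 1.

Definition num_subtrees_through (T : finType) (e : rel T) (v l : T) : nat :=
  #|[set S : {set T} | [&& is_subtree e S, v \in S & l \in S]]|.

(* Main.v *)
Require Import Defs.
From mathcomp Require Import all_boot.

Lemma card_two (T : finType) (v l : T) : v != l ->
  #|[set S : {set T} | (v \in S) && (l \in S)]| = 2 ^ (#|T| - 2).
Proof.
move=> hvl; set P := [set v; l].
have -> : [set S : {set T} | (v \in S) && (l \in S)] =
          [set A :|: P | A in powerset (~: P)].
  apply/setP => S; rewrite inE; apply/idP/imsetP.
    move=> /andP[hv hl]; exists (S :\: P).
      by rewrite powersetE setDE subsetIr.
    apply/setP => x; rewrite !inE; case: (x =P v) => [->|_]; first by rewrite hv.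
    by case: (x =P l) => [->|_]; rewrite ?hl ?andbT ?orbF.
  by case=> A _ ->; rewrite !inE !eqxx !orbT.
have key (X : {set T}) : X \subset ~: P -> (X :|: P) :&: ~: P = X.
  by rewrite setIUl setICr setU0 => /setIidPl.
rewrite card_in_imset; last first.
  by move=> A B; rewrite !powersetE => hA hB h; rewrite -(key A hA) h key.
rewrite card_powerset; congr (2 ^ _).
by rewrite -(cardsC P) cards2 hvl /= addKn.
Qed.

Lemma path_closed (T : finType) (r : rel T) (A : pred T) x p :
  x \in A -> path r x p -> (forall a b, a \in A -> r a b -> b \in A) ->
  last x p \in A.
Proof.
elim: p x => [|y p IH] x //= hx /andP[hxy hp] hA.
by apply: IH => //; exact: hA hxy.
Qed.

Lemma conn_closed (T : finType) (r : rel T) (A : pred T) x y :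
  x \in A -> connect r x y -> (forall a b, a \in A -> r a b -> b \in A) ->
  y \in A.
Proof. by move=> hx /connectP[p hp ->] hA; apply: path_closed hA. Qed.

Theorem mainTheorem12 (T : finType) (e : rel T) (v l : T) :
  is_tree e -> 1 < #|T| -> is_leaf e l -> l != v ->
  num_subtrees_through e v l <= 2 ^ (#|T| - 2) /\
  (num_subtrees_through e v l = 2 ^ (#|T| - 2) <->
   (forall u : T, u != v -> e v u)).
Proof.
move=> [[esym eirr] _] _ hleaf hlv.
have hvl : v != l by rewrite eq_sym.
have sub : [set S : {set T} | [&& is_subtree e S, v \in S & l \in S]] \subset
           [set S : {set T} | (v \in S) && (l \in S)].
  by apply/subsetP => S; rewrite !inE => /and3P[_ -> ->].
have le := subset_leq_card sub.
rewrite /num_subtrees_through (@card_two T v l hvl) in le *.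
split => //; split.
- move=> heq.
  have all : forall S : {set T}, v \in S -> l \in S -> is_subtree e S.
    move=> S hv hl.
    have : S \in [set S : {set T} | (v \in S) && (l \in S)] by rewrite inE hv hl.
    have E : [set S : {set T} | [&& is_subtree e S, v \in S & l \in S]] ==
           [set S : {set T} | (v \in S) && (l \in S)].
      by rewrite eqEcard sub /= (@card_two T v l hvl) -heq leqnn.
    rewrite -(eqP E).
    by rewrite inE => /and3P[].
  have conn : forall S : {set T}, v \in S -> l \in S -> forall y, y \in S ->
      connect (induced e S) v y.
    move=> S hv hl y hy; move: (all S hv hl) => /andP[_ /forall_inP H].
    by move: (H v hv) => /forall_inP; apply.
  have evl : e v l.
    apply/negPn/negP => nevl.
    have hS : v \in [set v; l] by rewrite !inE eqxx.
    have hS' : l \in [set v; l] by rewrite !inE eqxx orbT.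
    suff : l \in pred1 v by rewrite inE (negbTE hlv).
    apply: (@conn_closed T _ (pred1 v) v l (eqxx v) (conn _ hS hS' l hS')) => a b /eqP -> /=.
    rewrite /induced /= !inE => /andP[_ /andP[/orP[]/eqP -> // ]].
    by rewrite (negbTE nevl).
  move=> u huv; apply/negPn/negP => nevu.
  have hul : u != l by apply: contraNneq nevu => ->.
  pose S := [set v; l; u].
  have hv : v \in S by rewrite !inE eqxx.
  have hl : l \in S by rewrite !inE eqxx orbT.
  have hu : u \in S by rewrite !inE eqxx !orbT.
  suff : u \in [pred x | (x == v) || (x == l)] by rewrite inE /= (negbTE huv) (negbTE hul).
  apply: (@conn_closed T _ [pred x | (x == v) || (x == l)] v u _ (conn _ hv hl u hu)); first by rewrite inE /= eqxx.
  move=> a b /= /orP[]/eqP -> /andP[_ /andP[hb hab]].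
    move: hb; rewrite !inE => /orP[/orP[]|] /eqP hb; subst b.
    - by rewrite eqxx.
    - by rewrite eqxx orbT.
    - by rewrite hab in nevu.
  move: hleaf; rewrite /is_leaf /degree => /cards1P[x hx].
  have : v \in [set y | e l y] by rewrite inE esym.
  have : b \in [set y | e l y] by rewrite inE.
  by rewrite hx !inE => /eqP -> /eqP ->; rewrite eqxx.
- move=> hstar; apply/eqP; rewrite eqn_leq le /= -(@card_two T v l hvl).
  apply: subset_leq_card; apply/subsetP => S; rewrite !inE => /andP[hv hl].
  rewrite hv hl !andbT /is_subtree.
  apply/andP; split; first by apply/set0Pn; exists v.
  have tov : forall x, x \in S -> connect (induced e S) x v.
    move=> x hx; case: (eqVneq x v) => [->|hxv]; first exact: connect0.
    by apply: connect1; rewrite /induced /= hx hv esym hstar.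
  apply/forall_inP => x hx; apply/forall_inP => y hy.
  apply: connect_trans (tov x hx) _.
  case: (eqVneq y v) => [->|hyv]; first exact: connect0.
  by apply: connect1; rewrite /induced /= hy hv hstar.
Qed.
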